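(* A CFM process $p$ satisfies DNI if and only if every sequential process $p_i$ in the support $\mathrm{dom}(\mathrm{dec}(p))$ satisfies DNI.
   Context: Fix a finite set of actions $Act = H \cup L \cup \{\tau\}$, where $H$ (high-level actions) and $L$ (low-level actions) are disjoint and $\tau$ is the silent action; $\mu$ ranges over $Act$, $h$ over $H$. Fix a finite set of process constants disjoint from $Act$. CFM terms: guarded $s ::= \mathbf{0} \mid \mu.q \mid s+s$; sequential $q ::= s \mid C$; parallel $p ::= q \mid p \,|\, p$. A CFM process is a term all of whose constants have a defining equation $C \doteq s$ with $s$ guarded. LTS rules: $\mu.p \xrightarrow{\mu} p$; if $p \xrightarrow{\mu} p'$ and $C \doteq p$ then $C \xrightarrow{\mu} p'$; if $p \xrightarrow{\mu} p'$ then $p+q \xrightarrow{\mu} p'$ and $q+p \xrightarrow{\mu} p'$; if $p \xrightarrow{\mu} p'$ then $p\,|\,q \xrightarrow{\mu} p'\,|\,q$ and $q\,|\,p \xrightarrow{\mu} q\,|\,p'$. Reachability is in this LTS. An FSM is $N=(S,A,T)$ with finite places $S$, finite labels $A\ni\tau$, and $T \subseteq S \times A \times (S \cup \{\theta\})$ ($\theta$ the empty multiset). Markings are finite multisets over $S$; a transition $(s,\ell,m)$ is enabled at $m_1$ if $s\in m_1$ and firing gives $m_1 \xrightarrow{\ell} (m_1\ominus s)\oplus m$. Net semantics: places are sequential CFM processes other than $\mathbf{0}$; $\mathrm{dec}(\mathbf{0})=\theta$, $\mathrm{dec}(\mu.p)=\{\mu.p\}$, $\mathrm{dec}(p+p')=\{p+p'\}$,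 $\mathrm{dec}(C)=\{C\}$, $\mathrm{dec}(p\,|\,p')=\mathrm{dec}(p)\oplus\mathrm{dec}(p')$; $\mathrm{dom}(m)$ is the set of places with nonzero multiplicity in $m$. The net $[\![p]\!]$ has initial marking $\mathrm{dec}(p)$, all places and transitions reachable from it, and transitions $(s,\mu,\mathrm{dec}(s'))$ for reachable places $s$ with $s\xrightarrow{\mu}s'$ in the LTS. The net $[\![p\setminus H]\!]$ is obtained by renaming each place $s$ as $s\setminus H$, removing transitions labelled in $H$, and taking initial marking $\mathrm{dec}(p)\setminus H$ (elementwise renaming; similarly $m\setminus H$ for any marking $m$). Branching bisimilarity $\approx$ on places of an FSM: $s\Rightarrow^\epsilon m$ is the reflexive-transitive closure of $\tau$-steps. $R\subseteq S\times S$ is a branching bisimulation if whenever $(s_1,s_2)\in R$ and $s_1\xrightarrow{\ell}m_1$: either $\ell=\tau$ and $\exists m_2$, $s_2\Rightarrow^\epsilon m_2$ with $(s_1,m_2),(m_1,m_2)\in R$; or $\exists s,m_2$ with $s_2\Rightarrow^\epsilon s\xrightarrow{\ell}m_2$, $(s_1,s)\in R$ and either $m_1=\theta=m_2$ or $(m_1,m_2)\in R$; and symmetrically. $\approx$ is the union of all branching bisimulations. The additive closure $R^\oplus$ is the least marking relation with $(\theta,\theta)\in R^\oplus$ and closed under $(s_1,s_2)\in R,(m_1,m_2)\in R^\oplus \Rightarrow (s_1\oplus m_1,s_2\oplus m_2)\in R^\oplus$. Branching team equivalence is $\approx^\oplus$; for processes, $p\approx^\oplus q$ iff $\mathrm{dec}(p)\approx^\oplus\mathrm{dec}(q)$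 in the union of their nets, and $p'\setminus H\approx^\oplus p''\setminus H$ iff $\mathrm{dec}(p')\setminus H\approx^\oplus\mathrm{dec}(p'')\setminus H$ in the union of their restricted nets. DNI: a CFM process $p$ satisfies DNI if for all $p',p''$ reachable from $p$ and $h\in H$ with $p'\xrightarrow{h}p''$, $p'\setminus H\approx^\oplus p''\setminus H$; equivalently, for all markings $m_1,m_2$ reachable from $\mathrm{dec}(p)$ in $[\![p]\!]$ and $h\in H$ with $m_1\xrightarrow{h}m_2$, $m_1\setminus H \approx^\oplus m_2\setminus H$ in $[\![p\setminus H]\!]$. *)

(* Defs.v *)
From Stdlib Require Import List Permutation Relations.
Import ListNotations.
Set Implicit Arguments.

(* An FSM: places, labels (with a distinguished silent label), and
   transitions T ⊆ S × A × (S ∪ {θ}); θ is encoded as [None]. *)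
Record FSM := {
  place : Type;
  label : Type;
  ltau  : label;
  trans : place -> label -> option place -> Prop
}.

Section Bisim.
Variable N : FSM.

(* one tau step between "markings" of size <= 1 (option place) *)
Definition tau_step (a b : option (place N)) : Prop :=
  exists s, a = Some s /\ trans N s (ltau N) b.

Definition tau_star (s : place N) (m : option (place N)) : Prop :=
  clos_refl_trans _ tau_step (Some s) m.

Definition Rin (R : place N -> place N -> Prop) (m1 m2 : option (place N)) : Prop :=
  match m1, m2 with Some a, Some b => R a b | _, _ => False end.

Definition bb_simulates (R : place N -> place N -> Prop) : Prop :=
  forall s1 s2 l m1, R s1 s2 -> trans N s1 l m1 ->
    (l = ltau N /\ exists m2, tau_star s2 m2 /\ Rin R (Some s1) m2 /\ Rin R m1 m2)
    \/ (exists s m2, tau_star s2 (Some s) /\ trans N s l m2 /\ R s1 s /\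
          ((m1 = None /\ m2 = None) \/ Rin R m1 m2)).

Definition branching_bisimulation (R : place N -> place N -> Prop) : Prop :=
  bb_simulates R /\ bb_simulates (fun x y => R y x).

Definition bbisim (s1 s2 : place N) : Prop :=
  exists R, branching_bisimulation R /\ R s1 s2.

(* Markings: finite multisets over places, represented by lists
   (taken up to permutation). *)
Definition marking := list (place N).

Inductive add_clos (R : place N -> place N -> Prop) : marking -> marking -> Prop :=
| ac_nil : add_clos R [] []
| ac_cons s1 s2 m1 m2 : R s1 s2 -> add_clos R m1 m2 ->
    add_clos R (s1 :: m1) (s2 :: m2).

Definition add_clos_ms (R : place N -> place N -> Prop) (m1 m2 : marking) : Prop :=
  exists l1 l2, Permutation m1 l1 /\ Permutation m2 l2 /\ add_clos R l1 l2.

Definition team_equiv (m1 m2 : marking) : Prop := add_clos_ms bbisim m1 m2.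

End Bisim.

Section CFM.
Variables (Act K : Type).

Inductive guarded : Type :=
| gNil : guarded
| gPre : Act -> seqp -> guarded
| gSum : guarded -> guarded -> guarded
with seqp : Type :=
| sG : guarded -> seqp
| sC : K -> seqp.

Inductive par : Type :=
| pSeq : seqp -> par
| pPar : par -> par -> par.

(* defining equations C ≐ def C, def C guarded *)
Variable def : K -> guarded.

Inductive gstep : guarded -> Act -> seqp -> Prop :=
| gs_pre mu q : gstep (gPre mu q) mu q
| gs_suml s1 s2 mu q : gstep s1 mu q -> gstep (gSum s1 s2) mu q
| gs_sumr s1 s2 mu q : gstep s2 mu q -> gstep (gSum s1 s2) mu q.

Inductive sstep : seqp -> Act -> seqp -> Prop :=
| ss_g s mu q : gstep s mu q -> sstep (sG s) mu q
| ss_c C mu q : gstep (def C) mu q -> sstep (sC C) mu q.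

Inductive pstep : par -> Act -> par -> Prop :=
| ps_seq q mu q' : sstep q mu q' -> pstep (pSeq q) mu (pSeq q')
| ps_parl p1 p2 mu p1' : pstep p1 mu p1' -> pstep (pPar p1 p2) mu (pPar p1' p2)
| ps_parr p1 p2 mu p2' : pstep p2 mu p2' -> pstep (pPar p1 p2) mu (pPar p1 p2').

Definition reachable (p p' : par) : Prop :=
  clos_refl_trans _ (fun a b => exists mu, pstep a mu b) p p'.

(* dec on sequential terms, as a marking of size <= 1 *)
Definition dec_seq (q : seqp) : option seqp :=
  match q with sG gNil => None | _ => Some q end.

Definition opt_list {X} (o : option X) : list X :=
  match o with Some x => [x] | None => [] end.

Fixpoint dec (p : par) : list seqp :=
  match p with
  | pSeq q => opt_list (dec_seq q)
  | pPar p1 p2 => dec p1 ++ dec p2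
  end.

Definition dom_dec (p : par) (q : seqp) : Prop := In q (dec p).

Variables (tau : Act) (H : Act -> Prop).

(* The restricted net [[ _ \ H ]]: places s \ H (identified with s via the
   renaming), transitions (s\H, mu, dec(s')\H) for s -mu-> s', mu ∉ H. *)
Definition restricted_net : FSM := {|
  place := seqp;
  label := Act;
  ltau := tau;
  trans := fun s mu m => ~ H mu /\ exists s', sstep s mu s' /\ m = dec_seq s'
|}.

Definition restr_team_equiv (p1 p2 : par) : Prop :=
  team_equiv (N := restricted_net) (dec p1) (dec p2).

Definition DNI (p : par) : Prop :=
  forall p1 p2 h, reachable p p1 -> reachable p p2 -> H h -> pstep p1 h p2 ->
    restr_team_equiv p1 p2.

End CFM.

(* Main.v *)
Require Import Defs.
From Stdlib Require Import List.
From Stdlib Require Import Permutation Relations Lia.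
Import ListNotations.
Set Implicit Arguments.
Arguments tau_star {N}.
Arguments bbisim {N}.
Arguments bb_simulates {N}.
Arguments Rin {N}.

Lemma perm_cons_inv2 {A} (a b : A) l m : Permutation (a :: l) (b :: m) ->
  (a = b /\ Permutation l m) \/
  (exists m', Permutation l (b :: m') /\ Permutation m (a :: m')).
Proof.
  intros HP. destruct (Permutation_vs_cons_inv HP) as [l1 [l2 E]].
  destruct l1 as [|c l1]; simpl in E; inversion E; subst.
  - left. split; auto. eapply Permutation_cons_inv; eauto.
  - right. exists (l1 ++ l2). split.
    + apply Permutation_sym, Permutation_middle.
    + apply Permutation_sym. apply Permutation_cons_inv with b.
      eapply Permutation_trans; [|exact HP].
      eapply Permutation_trans; [apply perm_swap|].
      apply perm_skip. apply Permutation_middle.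
Qed.

Section B.
Variable N : FSM.

Lemma ts_trans s t m : tau_star (N:=N) s (Some t) -> tau_star t m -> tau_star s m.
Proof. intros. eapply rt_trans; eauto. Qed.
Lemma ts_step s m : trans N s (ltau N) m -> tau_star s m.
Proof. intros. apply rt_step. exists s; auto. Qed.

Lemma sim_star (R : place N -> place N -> Prop) : bb_simulates R ->
  forall s1 s2 m1, R s1 s2 -> tau_star s1 m1 ->
  exists m2, tau_star s2 m2 /\ ((m1 = None /\ m2 = None) \/ Rin R m1 m2).
Proof.
  intros HR s1 s2 m1 Hr Hs. unfold tau_star in Hs. apply clos_rt_rtn1 in Hs.
  induction Hs as [| y z Hyz Hs IH].
  - exists (Some s2). split. apply rt_refl. right. exact Hr.
  - destruct Hyz as [s [-> Ht]].
    destruct IH as [m2 [Hm2 [[Hn _]|Hr']]]; [discriminate|].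
    destruct m2 as [t|]; [|simpl in Hr'; contradiction]. simpl in Hr'.
    destruct (HR _ _ _ _ Hr' Ht) as [[_ [m3 [H1 [_ H3]]]] | [u [m3 [H1 [H2 [_ H4]]]]]].
    + exists m3. split. eapply ts_trans; eauto. right; exact H3.
    + exists m3. split. eapply ts_trans. exact Hm2. eapply ts_trans. exact H1.
      apply ts_step; exact H2. exact H4.
Qed.

Lemma comp_sim (R S T : place N -> place N -> Prop) :
  bb_simulates R -> bb_simulates S ->
  (forall x y, T x y -> exists t, R x t /\ S t y) ->
  (forall x t y, R x t -> S t y -> T x y) -> bb_simulates T.
Proof.
  intros HR HS HT1 HT2 s1 s2 l m1 HT Ht.
  destruct (HT1 _ _ HT) as [t [Hst Hts]].
  destruct (HR _ _ _ _ Hst Ht) as [[Hl [mt [H1 [H2 H3]]]] | [t'' [mt [H1 [H2 [H3 H4]]]]]].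
  - destruct mt as [t'|]; [|simpl in H2; contradiction]. simpl in H2, H3.
    destruct (sim_star HS _ Hts H1) as [m2 [Hm2 [[Hn _]|Hr]]]; [discriminate|].
    destruct m2 as [u|]; [|simpl in Hr; contradiction]. simpl in Hr.
    left. split; [exact Hl|]. exists (Some u). split; [exact Hm2|]. split.
    + simpl. eauto.
    + destruct m1 as [s1'|]; [|simpl in H3; contradiction]. simpl in *. eauto.
  - destruct (sim_star HS _ Hts H1) as [m2 [Hm2 [[Hn _]|Hr]]]; [discriminate|].
    destruct m2 as [s2''|]; [|simpl in Hr; contradiction]. simpl in Hr.
    destruct (HS _ _ _ _ Hr H2) as [[Hl [m3 [G1 [G2 G3]]]] | [u [m3 [G1 [G2 [G3 G4]]]]]].
    + left. split; [exact Hl|]. exists m3. split. eapply ts_trans; eauto.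
      destruct m3 as [v|]; [|simpl in G2; contradiction]. simpl in *. split. eauto.
      destruct H4 as [[-> ->]|H4]. contradiction.
      destruct m1 as [s1'|]; [|simpl in H4; contradiction].
      destruct mt as [t'|]; [|simpl in H4; contradiction]. simpl in *. eauto.
    + right. exists u, m3. split. eapply ts_trans; eauto. split; [exact G2|]. split. eauto.
      destruct H4 as [[-> ->]|H4].
      * destruct G4 as [[_ ->]|G4]. left; auto. simpl in G4; contradiction.
      * destruct m1 as [s1'|]; [|simpl in H4; contradiction].
        destruct mt as [t'|]; [|simpl in H4; contradiction]. simpl in H4.
        destruct G4 as [[Hn _]|G4]; [discriminate|].
        destruct m3 as [v|]; [|simpl in G4; contradiction]. right. simpl in *. eauto.
Qed.

Lemma bbisim_trans a b c : bbisim (N:=N) a b -> bbisim b c -> bbisim a c.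
Proof.
  intros [R1 [[A1 B1] H1]] [R2 [[A2 B2] H2]].
  exists (fun x y => exists t, R1 x t /\ R2 t y). split; [split|eauto].
  - eapply comp_sim with (R := R1) (S := R2); eauto.
  - eapply comp_sim with (R := fun x y => R2 y x) (S := fun x y => R1 y x); eauto.
    intros x y [t [? ?]]; eauto.
Qed.

Lemma bb_eq : bb_simulates (N:=N) eq.
Proof.
  intros s1 s2 l m1 <- Ht. right. exists s1, m1. split. apply rt_refl.
  split; auto. split; auto. destruct m1; [right; simpl; auto|left; auto].
Qed.

Lemma bbisim_refl a : bbisim (N:=N) a a.
Proof.
  exists eq. split; auto. split. apply bb_eq.
  intros s1 s2 l m1 E Ht; subst s2. right. exists s1, m1. split. apply rt_refl.
  split; auto. split; auto. destruct m1; [right; simpl; auto|left; auto].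
Qed.

Lemma ac_length R l1 l2 : add_clos (N:=N) R l1 l2 -> length l1 = length l2.
Proof. induction 1; simpl; auto. Qed.

Lemma acms_length R l1 l2 : add_clos_ms (N:=N) R l1 l2 -> length l1 = length l2.
Proof.
  intros [k1 [k2 [P1 [P2 A]]]]. rewrite (Permutation_length P1), (Permutation_length P2).
  eapply ac_length; eauto.
Qed.

Lemma acms_perm R m1 m2 m1' m2' : add_clos_ms (N:=N) R m1 m2 ->
  Permutation m1 m1' -> Permutation m2 m2' -> add_clos_ms R m1' m2'.
Proof.
  intros [k1 [k2 [P1 [P2 A]]]] Q1 Q2. exists k1, k2. split; [|split; auto].
  eapply Permutation_trans; [apply Permutation_sym; eauto| auto].
  eapply Permutation_trans; [apply Permutation_sym; eauto| auto].
Qed.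

Lemma ac_refl R l : (forall x, R x x) -> add_clos (N:=N) R l l.
Proof. intros HR; induction l; constructor; auto. Qed.

Lemma ac_extract R l1 l2 : add_clos (N:=N) R l1 l2 -> forall a m, Permutation l1 (a :: m) ->
  exists x m2, Permutation l2 (x :: m2) /\ R a x /\ add_clos_ms R m m2.
Proof.
  induction 1 as [|s1 s2 m1 m2 Hr Hac IH]; intros a m HP.
  - exfalso; eapply Permutation_nil_cons; eauto.
  - destruct (perm_cons_inv2 HP) as [[<- P]|[m' [P1 P2]]].
    + exists s2, m2. split; [apply Permutation_refl|]. split; auto.
      exists m1, m2. split; [apply Permutation_sym; auto|]. split; auto.
    + destruct (IH a m' P1) as [x [m2' [Q [Rx [k1 [k2 [K1 [K2 KK]]]]]]]].
      exists x, (s2 :: m2'). split.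
      * eapply Permutation_trans; [apply perm_skip; exact Q|]. apply perm_swap.
      * split; auto. exists (s1 :: k1), (s2 :: k2). split.
        eapply Permutation_trans; [exact P2|]. apply perm_skip; auto.
        split. apply perm_skip; auto. constructor; auto.
Qed.

Lemma cancel R : (forall x y z, R x y -> R y z -> R x z) ->
  forall n m, length m < n -> forall a b, add_clos_ms (N:=N) R (a :: m) (b :: m) -> R a b.
Proof.
  intros Htr n. induction n; intros m Hl a b Hms; [lia|].
  destruct Hms as [l1 [l2 [P1 [P2 Hac]]]].
  destruct (ac_extract Hac (Permutation_sym P1)) as [x [m2 [Q [Rx Hms']]]].
  destruct (perm_cons_inv2 (Permutation_trans P2 Q)) as [[<- _]|[m' [M1 M2]]]; auto.
  apply Htr with x; auto.
  apply (IHn m'). rewrite (Permutation_length M1) in Hl. simpl in Hl. lia.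
  eapply acms_perm; eauto.
Qed.

End B.

Section C.
Variables (Act K : Type) (def : K -> guarded Act K).

Lemma sstep_dec q mu q' : sstep def q mu q' -> dec_seq q = Some q.
Proof.
  intros Hs. destruct q as [g|C]; simpl; auto. destruct g; auto.
  inversion Hs as [g mu' q'' Hg| ]; subst. inversion Hg.
Qed.

Lemma dec_seq_in (q q0 : seqp Act K) : In q (opt_list (dec_seq q0)) -> q = q0.
Proof. destruct q0 as [g|C]; [destruct g|]; simpl; intuition. Qed.

Lemma pstep_decomp x mu y : pstep def x mu y -> exists q1 q2 rest, sstep def q1 mu q2 /\
  Permutation (dec x) (q1 :: rest) /\ Permutation (dec y) (opt_list (dec_seq q2) ++ rest).
Proof.
  induction 1 as [q mu q' Hs|p1 p2 mu p1' Hs IH|p1 p2 mu p2' Hs IH].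
  - exists q, q', []. split; auto. simpl. rewrite (sstep_dec Hs). simpl.
    rewrite app_nil_r. split; apply Permutation_refl.
  - destruct IH as [q1 [q2 [rest [S [P1 P2]]]]].
    exists q1, q2, (rest ++ dec p2). split; auto. simpl. split.
    + change (q1 :: rest ++ dec p2) with ((q1 :: rest) ++ dec p2).
      apply Permutation_app_tail; auto.
    + rewrite app_assoc. apply Permutation_app_tail; auto.
  - destruct IH as [q1 [q2 [rest [S [P1 P2]]]]].
    exists q1, q2, (dec p1 ++ rest). split; auto. simpl. split.
    + eapply Permutation_trans. apply Permutation_app_head; exact P1.
      apply Permutation_sym, Permutation_middle.
    + eapply Permutation_trans. apply Permutation_app_head; exact P2.
      apply Permutation_app_swap_app.
Qed.

Lemma context q p : In q (dec p) -> exists f : seqp Act K -> par Act K, f q = p /\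
  (forall q1 q2 mu, sstep def q1 mu q2 -> pstep def (f q1) mu (f q2)) /\
  exists rest, forall q', Permutation (dec (f q')) (opt_list (dec_seq q') ++ rest).
Proof.
  induction p as [q0|p1 IH1 p2 IH2]; intros Hin.
  - apply dec_seq_in in Hin. subst. exists (@pSeq _ _). split; auto. split.
    + intros; constructor; auto.
    + exists []. intros. rewrite app_nil_r. apply Permutation_refl.
  - simpl in Hin. apply in_app_or in Hin as [Hin|Hin].
    + destruct (IH1 Hin) as [f [Hf [Hs [rest Hr]]]].
      exists (fun x => pPar (f x) p2). split; [rewrite Hf; auto|]. split.
      * intros. apply ps_parl. auto.
      * exists (rest ++ dec p2). intros. simpl. rewrite app_assoc.
        apply Permutation_app_tail; auto.
    + destruct (IH2 Hin) as [f [Hf [Hs [rest Hr]]]].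
      exists (fun x => pPar p1 (f x)). split; [rewrite Hf; auto|]. split.
      * intros. apply ps_parr. auto.
      * exists (dec p1 ++ rest). intros. simpl.
        eapply Permutation_trans. apply Permutation_app_head; apply Hr.
        apply Permutation_app_swap_app.
Qed.

Lemma reach_seq q x (f : seqp Act K -> par Act K) :
  (forall q1 q2 mu, sstep def q1 mu q2 -> pstep def (f q1) mu (f q2)) ->
  reachable def (pSeq q) x -> exists q1, x = pSeq q1 /\ reachable def (f q) (f q1).
Proof.
  intros Hf Hr. unfold reachable in Hr. apply clos_rt_rtn1 in Hr.
  induction Hr as [|y z [mu Hyz] Hr IH].
  - exists q. split; auto. apply rt_refl.
  - destruct IH as [q1 [-> R1]]. inversion Hyz; subst.
    eexists; split; [reflexivity|]. eapply rt_trans; [exact R1|].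
    apply rt_step. exists mu. apply Hf; auto.
Qed.

Lemma pstep_in x mu y : pstep def x mu y -> forall q1, In q1 (dec y) ->
  In q1 (dec x) \/ exists q0, In q0 (dec x) /\ sstep def q0 mu q1.
Proof.
  induction 1 as [q mu q' Hs|p1 p2 mu p1' Hs IH|p1 p2 mu p2' Hs IH]; intros q1 Hin.
  - apply dec_seq_in in Hin. subst. right. exists q. split; auto.
    simpl. rewrite (sstep_dec Hs). simpl; auto.
  - simpl in *. apply in_app_or in Hin as [Hin|Hin].
    + destruct (IH _ Hin) as [?|[q0 [? ?]]]; [left|right; exists q0; split]; auto using in_or_app.
    + left; auto using in_or_app.
  - simpl in *. apply in_app_or in Hin as [Hin|Hin].
    + left; auto using in_or_app.
    + destruct (IH _ Hin) as [?|[q0 [? ?]]]; [left|right; exists q0; split]; auto using in_or_app.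
Qed.

Lemma reach_in p p1 : reachable def p p1 -> forall q1, In q1 (dec p1) ->
  exists q, In q (dec p) /\ reachable def (pSeq q) (pSeq q1).
Proof.
  intros Hr. unfold reachable in Hr. apply clos_rt_rtn1 in Hr.
  induction Hr as [|y z [mu Hyz] Hr IH]; intros q1 Hin.
  - exists q1. split; auto. apply rt_refl.
  - destruct (pstep_in Hyz _ Hin) as [H1|[q0 [H1 H2]]].
    + apply IH; auto.
    + destruct (IH _ H1) as [q [Hq Rq]]. exists q. split; auto.
      eapply rt_trans; [exact Rq|]. apply rt_step. exists mu. constructor; auto.
Qed.

End C.

Theorem corollary4p1 (Act K : Type) (tau : Act) (H : Act -> Prop)
  (tau_not_high : ~ H tau)
  (Act_finite : exists l : list Act, forall a : Act, In a l)
  (K_finite : exists l : list K, forall C : K, In C l)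
  (def : K -> guarded Act K) (p : par Act K) :
  DNI def tau H p <->
  (forall q : seqp Act K, dom_dec p q -> DNI def tau H (pSeq q)).
Proof.
  set (NN := restricted_net def tau H).
  split.
  - intros HD q Hq p1 p2 h R1 R2 Hh Hst.
    destruct (context def q p Hq) as [f [Hfq [Hfs [rest Hrest]]]].
    destruct (@reach_seq Act K def q p1 f Hfs R1) as [q1 [-> Hr1]]. rewrite Hfq in Hr1.
    inversion Hst as [a b c S3| |]; subst.
    assert (Hst' : pstep def (f q1) h (f c)) by (apply Hfs; auto).
    assert (Hr2 : reachable def (f q) (f c)) by (eapply rt_trans; [exact Hr1| apply rt_step; exists h; exact Hst']).
    assert (HT := HD (f q1) (f c) h Hr1 Hr2 Hh Hst').
    unfold restr_team_equiv, team_equiv in *.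
    pose proof (acms_perm HT (Hrest q1) (Hrest c)) as HT2.
    rewrite (sstep_dec S3) in HT2. simpl in HT2 |- *. rewrite (sstep_dec S3). simpl.
    destruct (dec_seq c) as [c'|] eqn:E; simpl in HT2.
    + assert (B : bbisim (N:=NN) q1 c').
      { eapply (cancel (N:=NN)) with (n := S (length rest)) (m := rest); auto.
        apply bbisim_trans. }
      exists [q1], [c']. split; [apply Permutation_refl|]. split; [apply Permutation_refl|].
      constructor; auto. constructor.
    + apply acms_length in HT2. simpl in HT2. lia.
  - intros HC p1 p2 h R1 R2 Hh Hst.
    destruct (pstep_decomp Hst) as [q1 [q2 [rest [Hs [P1 P2]]]]].
    assert (Hin : In q1 (dec p1)) by (eapply Permutation_in; [apply Permutation_sym; exact P1 | left; reflexivity]).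
    destruct (reach_in R1 _ Hin) as [q [Hq Hrq]].
    assert (Hst' : pstep def (pSeq q1) h (pSeq q2)) by (constructor; auto).
    assert (Hr2 : reachable def (pSeq q) (pSeq q2)) by (eapply rt_trans; [exact Hrq| apply rt_step; exists h; exact Hst']).
    assert (HT := HC q Hq (pSeq q1) (pSeq q2) h Hrq Hr2 Hh Hst').
    unfold restr_team_equiv, team_equiv in *. simpl in HT.
    rewrite (sstep_dec Hs) in HT. simpl in HT.
    destruct (dec_seq q2) as [q2'|] eqn:E; simpl in HT, P2.
    + destruct HT as [k1 [k2 [K1 [K2 KK]]]].
      destruct (ac_extract KK (Permutation_sym K1)) as [x [m2 [Q [Rx _]]]].
      assert (Hx : x = q2').
      { assert (In x [q2']) by (eapply Permutation_in; [apply Permutation_sym; eapply Permutation_trans; [exact K2|exact Q]| left; auto]).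
        simpl in H0; intuition. }
      subst x.
      exists (q1 :: rest), (q2' :: rest). split; auto. split; auto.
      constructor; auto. apply ac_refl. apply bbisim_refl.
    + apply acms_length in HT. simpl in HT. lia.
Qed.
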